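(* Let $(L,G,\mathcal D)$ be an abelian Chaplygin nonholonomic system as described in the context, with constraints $\phi^a(q,\dot q)=\dot s^a+A^a_\alpha(r)\dot r^\alpha=0$, $a=1,\dots,k<n$, where $q=(r,s)$. Suppose a nowhere-zero $f(r)\in C^1$ has been found satisfying $$\frac{\partial f}{\partial r^\delta}G_{\alpha\nu}+\frac{\partial f}{\partial r^\nu}G_{\alpha\delta}-2\frac{\partial f}{\partial r^\alpha}G_{\delta\nu}=f\big(K^\mu_{\alpha\delta}G_{\mu\nu}+K^\mu_{\alpha\nu}G_{\mu\delta}\big)\quad\text{for all }\alpha,\nu,\delta,$$ and let $\mathcal L(q,\omega):=L(q,\dot q=f\omega)$ and $\phi^a(q,\omega):=\phi^a(q,\dot q=f\omega)$. If the matrix $\widetilde g_{ab}:=\partial^2\mathcal L/\partial\omega^a\partial\omega^b$ (second derivatives with respect to the $s$-components of $\omega$) is invertible, then the nonholonomic mechanics of the original system can be derived from the equations $$\frac{d}{dt}\frac{\partial\mathcal L_V}{\partial\omega^I}-f\frac{\partial\mathcal L_V}{\partial q^I}=0,\qquad I=1,\dots,n,$$ with $\dot q=f\omega$, using the Lagrangian $$\mathcal L_V(q,\omega)=\mathcal L(q,\omega)-\frac1f\frac{\partial\mathcal L}{\partial\omega^a}\phi^a(q,\omega),$$ and imposing the nonholonomic constraints $\phi^a=0$ on the initial conditions.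
   Context: An abelian Chaplygin nonholonomic system: $Q$ of dimension $n$ with local coordinates $q=(r^\alpha,s^a)$, $\alpha=1,\dots,m=n-k$, $a=1,\dots,k$, a mechanical Lagrangian $L(r,\dot r,\dot s)$ not depending on $s$ (invariant under the abelian group $G$ acting by translations in $s$), and linear constraints $\dot s^a=-A^a_\alpha(r)\dot r^\alpha$; its nonholonomic mechanics are the Lagrange–d'Alembert equations for $L$ with these constraints. Write $g_{\alpha\beta},g_{a\alpha},g_{ab}$ for the coefficients of the kinetic energy in $L$ (so $L=\tfrac12g_{\alpha\beta}\dot r^\alpha\dot r^\beta+g_{a\alpha}\dot r^\alpha\dot s^a+\tfrac12g_{ab}\dot s^a\dot s^b-V(r)$). The constrained Lagrangian is $l_c(r,\dot r)=L(r,\dot r,-A\dot r)$; $G_{\alpha\beta}=\partial^2l_c/\partial\dot r^\alpha\partial\dot r^\beta$, assumed invertible with inverse $G^{\alpha\beta}$; $\mathcal B^a_{\alpha\beta}=\partial A^a_\alpha/\partial r^\beta-\partial A^a_\beta/\partial r^\alpha$; $M_{a\alpha}=g_{a\alpha}-g_{ab}A^b_\alpha$; $K^\gamma_{\beta\alpha}=M_{b\epsilon}G^{\epsilon\gamma}\mathcal B^b_{\beta\alpha}$. Quasivelocities $\omega$ are defined by $\dot q=f(r)\omega$ (componentwise for all $n$ coordinates); the time reparameterization is $d\tau=f\,dt$. Summation convention. *)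

(* Defs.v *)
From HB Require Import structures.
From mathcomp Require Import all_boot all_order all_algebra.
From mathcomp Require Import all_classical all_reals all_analysis.
Set Implicit Arguments. Unset Strict Implicit. Unset Printing Implicit Defensive.
Import Order.TTheory GRing.Theory Num.Theory.
Import numFieldNormedType.Exports.
Local Open Scope ring_scope.
Local Open Scope classical_set_scope.

Definition ev (R : realType) (p : nat) (i : 'I_p) : 'rV[R]_p := delta_mx 0 i.

Definition pd (R : realType) (p : nat) (F : 'rV[R]_p -> R) (i : 'I_p)
  (x : 'rV[R]_p) : R := 'D_(ev R i) F x.

Section Chaplygin.
Variables (R : realType) (m k : nat).

(* Data of an abelian Chaplygin system in coordinates q = (r, s),
   r in R^m, s in R^k: kinetic coefficients g_{alpha beta}, g_{a alpha},
   g_{ab}, potential V(r), constraint coefficients A^a_alpha(r). *)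
Record chap_data := ChapData {
  gRR : 'rV[R]_m -> 'M[R]_m;
  gSR : 'rV[R]_m -> 'M[R]_(k, m);
  gSS : 'rV[R]_m -> 'M[R]_k;
  pot : 'rV[R]_m -> R;
  Acon : 'rV[R]_m -> 'M[R]_(k, m)
}.

Variable D : chap_data.

Definition Lag (r : 'rV[R]_m) (s : 'rV[R]_k) (rd : 'rV[R]_m) (sd : 'rV[R]_k) : R :=
  2^-1 * (\sum_(al < m) \sum_(be < m) gRR D r al be * rd 0 al * rd 0 be)
  + (\sum_(a < k) \sum_(al < m) gSR D r a al * rd 0 al * sd 0 a)
  + 2^-1 * (\sum_(a < k) \sum_(b < k) gSS D r a b * sd 0 a * sd 0 b)
  - pot D r.

Definition phi (r : 'rV[R]_m) (rd : 'rV[R]_m) (sd : 'rV[R]_k) (a : 'I_k) : R :=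
  sd 0 a + \sum_(al < m) Acon D r a al * rd 0 al.

Definition lc (r : 'rV[R]_m) (rd : 'rV[R]_m) : R :=
  Lag r 0 rd (- (rd *m (Acon D r)^T)).

(* G_{alpha beta}(r) = d^2 l_c / d rdot^alpha d rdot^beta
   (l_c is quadratic in rdot, so this is evaluated at rdot = 0) *)
Definition Gmat (r : 'rV[R]_m) : 'M[R]_m :=
  \matrix_(al, be) pd (fun v => pd (lc r) al v) be 0.

Definition Bc (r : 'rV[R]_m) (a : 'I_k) (al be : 'I_m) : R :=
  pd (fun x => Acon D x a al) be r - pd (fun x => Acon D x a be) al r.

Definition Mc (r : 'rV[R]_m) (a : 'I_k) (al : 'I_m) : R :=
  gSR D r a al - \sum_(b < k) gSS D r a b * Acon D r b al.

Definition Kc (r : 'rV[R]_m) (ga be al : 'I_m) : R :=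
  \sum_(b < k) \sum_(ep < m) Mc r b ep * invmx (Gmat r) ep ga * Bc r b be al.

Definition f_condition (f : 'rV[R]_m -> R) (r : 'rV[R]_m) (al nu de : 'I_m) : Prop :=
  pd f de r * Gmat r al nu + pd f nu r * Gmat r al de
    - 2 * pd f al r * Gmat r de nu
  = f r * ((\sum_(mu < m) Kc r mu al de * Gmat r mu nu)
           + \sum_(mu < m) Kc r mu al nu * Gmat r mu de).

Variable f : 'rV[R]_m -> R.

Definition LagW (r : 'rV[R]_m) (s : 'rV[R]_k) (wr : 'rV[R]_m) (ws : 'rV[R]_k) : R :=
  Lag r s (f r *: wr) (f r *: ws).

Definition phiW (r : 'rV[R]_m) (wr : 'rV[R]_m) (ws : 'rV[R]_k) (a : 'I_k) : R :=
  phi r (f r *: wr) (f r *: ws) a.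

Definition LV (r : 'rV[R]_m) (s : 'rV[R]_k) (wr : 'rV[R]_m) (ws : 'rV[R]_k) : R :=
  LagW r s wr ws
  - (f r)^-1 * \sum_(a < k) pd (fun w => LagW r s wr w) a ws * phiW r wr ws a.

Definition gtilde (r : 'rV[R]_m) (s : 'rV[R]_k) (wr : 'rV[R]_m) (ws : 'rV[R]_k)
  : 'M[R]_k :=
  \matrix_(a, b) pd (fun w => pd (fun w' => LagW r s wr w') a w) b ws.

Definition omR (rc : R -> 'rV[R]_m) (t : R) : 'rV[R]_m := (f (rc t))^-1 *: derive1 rc t.
Definition omS (rc : R -> 'rV[R]_m) (sc : R -> 'rV[R]_k) (t : R) : 'rV[R]_k :=
  (f (rc t))^-1 *: derive1 sc t.

Definition LV_equations (I : set R) (rc : R -> 'rV[R]_m) (sc : R -> 'rV[R]_k) : Prop :=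
  forall t, I t ->
    (forall al : 'I_m,
       derive1 (fun u => pd (fun w => LV (rc u) (sc u) w (omS rc sc u)) al (omR rc u)) t
       - f (rc t) * pd (fun x => LV x (sc t) (omR rc t) (omS rc sc t)) al (rc t) = 0)
    /\
    (forall b : 'I_k,
       derive1 (fun u => pd (fun w => LV (rc u) (sc u) (omR rc u) w) b (omS rc sc u)) t
       - f (rc t) * pd (fun y => LV (rc t) y (omR rc t) (omS rc sc t)) b (sc t) = 0).

End Chaplygin.

Section NH.
Variables (R : realType) (m k : nat) (D : chap_data R m k).

(* nonholonomic mechanics on the time set I: the constraints phi^a = 0 and the
   Lagrange-d'Alembert equations
   d/dt dL/dqdot^I - dL/dq^I = lambda_a dphi^a/dqdot^I with multipliers lambda *)
Definition nonholonomic (I : set R) (rc : R -> 'rV[R]_m) (sc : R -> 'rV[R]_k) : Prop :=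
  (forall t, I t -> forall a, phi D (rc t) (derive1 rc t) (derive1 sc t) a = 0) /\
  exists lam : 'I_k -> R -> R, forall t, I t ->
    (forall al : 'I_m,
       derive1 (fun u => pd (fun v => Lag D (rc u) (sc u) v (derive1 sc u)) al (derive1 rc u)) t
       - pd (fun x => Lag D x (sc t) (derive1 rc t) (derive1 sc t)) al (rc t)
       = \sum_(a < k) lam a t * pd (fun v => phi D (rc t) v (derive1 sc t) a) al (derive1 rc t))
    /\
    (forall b : 'I_k,
       derive1 (fun u => pd (fun w => Lag D (rc u) (sc u) (derive1 rc u) w) b (derive1 sc u)) t
       - pd (fun y => Lag D (rc t) y (derive1 rc t) (derive1 sc t)) b (sc t)
       = \sum_(a < k) lam a t * pd (fun w => phi D (rc t) (derive1 rc t) w a) b (derive1 sc t)).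

Definition data_regular (U : set 'rV[R]_m) : Prop :=
  forall r, U r ->
    (gRR D r)^T = gRR D r /\ (gSS D r)^T = gSS D r /\
    (forall i j, differentiable (fun x => gRR D x i j) r) /\
    (forall i j, differentiable (fun x => gSR D x i j) r) /\
    (forall i j, differentiable (fun x => gSS D x i j) r) /\
    (forall i j, differentiable (fun x => Acon D x i j) r) /\
    differentiable (pot D) r.

End NH.

Definition C1_on (R : realType) (p : nat) (U : set 'rV[R]_p) (F : 'rV[R]_p -> R) : Prop :=
  forall r, U r -> differentiable F r /\
    forall i, pd F i x @[x --> r] --> pd F i r.

(* Main.v *)
Require Import Defs.
From HB Require Import structures.
From mathcomp Require Import all_boot all_order all_algebra.
From mathcomp Require Import all_classical all_reals all_analysis.
From mathcomp Require Import ring.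
Import Order.TTheory GRing.Theory Num.Theory.
Import numFieldNormedType.Exports.
Local Open Scope ring_scope.
Local Open Scope classical_set_scope.

Module T1.
Set Implicit Arguments.
Unset Strict Implicit.
Section Tool.
Variables (R : realType) (V : normedModType R).
Implicit Types (F G : V -> R) (x v : V).

Lemma isd_add F G x v dF dG : is_derive x v F dF -> is_derive x v G dG ->
  is_derive x v (fun y => F y + G y) (dF + dG).
Proof. exact: is_deriveD. Qed.
Lemma isd_sub F G x v dF dG : is_derive x v F dF -> is_derive x v G dG ->
  is_derive x v (fun y => F y - G y) (dF - dG).
Proof. exact: is_deriveB. Qed.
Lemma isd_opp F x v dF : is_derive x v F dF ->
  is_derive x v (fun y => - F y) (- dF).
Proof. exact: is_deriveN. Qed.
Lemma isd_mul F G x v dF dG : is_derive x v F dF -> is_derive x v G dG ->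
  is_derive x v (fun y => F y * G y) (F x * dG + G x * dF).
Proof. exact: is_deriveM. Qed.
Lemma isd_cst x v (c : R) : is_derive x v (fun _ => c) 0.
Proof. exact: is_derive_cst. Qed.
Lemma isd_sum n (F : 'I_n -> V -> R) x v dF :
  (forall i, is_derive x v (F i) (dF i)) ->
  is_derive x v (fun y => \sum_(i < n) F i y) (\sum_(i < n) dF i).
Proof.
move=> H; have := is_derive_sum H.
by rewrite (_ : \sum_(i < n) F i = (fun y => \sum_(i < n) F i y)) // funeqE => y; rewrite fct_sumE.
Qed.
Lemma isd_atom F x v : derivable F x v -> is_derive x v F ('D_v F x).
Proof. exact: derivableP. Qed.
End Tool.

Lemma isd_coord (R : realType) p (x v : 'rV[R]_p) j :
  is_derive x v (fun y : 'rV[R]_p => y 0 j) (v 0 j).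
Proof.
have dI : derivable (@id 'rV[R]_p) x v by exact: derivable_id.
have := (derivable_mxP _ _ _).1 dI 0 j => dj.
apply: DeriveDef => //.
have := derive_mx dI; rewrite derive_id => /matrixP/(_ 0 j); rewrite mxE => ->//.
Qed.

Lemma isd_coordZ (R : realType) p (x v : 'rV[R]_p) (c : R) j :
  is_derive x v (fun y : 'rV[R]_p => (c *: y) 0 j) (c * v 0 j).
Proof.
apply: is_derive_eq.
  have H := isd_mul (isd_cst x v c) (isd_coord x v j).
  by apply: near_eq_is_derive H; near=> y; rewrite mxE.
by rewrite mulr0 addr0.
Unshelve. all: by end_near.
Qed.

Lemma pdE (R : realType) p (F : 'rV[R]_p -> R) i x df : is_derive x (ev R i) F df -> pd F i x = df.
Proof. by move=> H; rewrite /pd derive_val. Qed.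

Lemma evE (R : realType) p (i j : 'I_p) : ev R i 0 j = (j == i)%:R.
Proof. by rewrite /ev mxE eqxx. Qed.

Lemma sum_dR (R : realType) n (F : 'I_n -> R) i : \sum_(j < n) F j * (j == i)%:R = F i.
Proof. by rewrite (bigD1 i) //= eqxx mulr1 big1 ?addr0 // => j /negPf ->; rewrite mulr0. Qed.
Lemma sum_dL (R : realType) n (F : 'I_n -> R) i : \sum_(j < n) (j == i)%:R * F j = F i.
Proof. by under eq_bigr do rewrite mulrC; exact: sum_dR. Qed.

Section Tool2.
Variables (R : realType) (V : normedModType R).
Implicit Types (F G : V -> R) (x v : V).
Lemma isd_mulc (c : R) G x v dG : is_derive x v G dG ->
  is_derive x v (fun y => c * G y) (c * dG).
Proof. by move=> H; have := isd_mul (isd_cst x v c) H; rewrite mulr0 addr0. Qed.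
Lemma isd_mulcr (c : R) G x v dG : is_derive x v G dG ->
  is_derive x v (fun y => G y * c) (dG * c).
Proof. by move=> H; have := isd_mul H (isd_cst x v c); rewrite mulr0 add0r mulrC. Qed.
Lemma isd_addc (c : R) G x v dG : is_derive x v G dG ->
  is_derive x v (fun y => c + G y) dG.
Proof. by move=> H; have := isd_add (isd_cst x v c) H; rewrite add0r. Qed.
Lemma isd_addcr (c : R) G x v dG : is_derive x v G dG ->
  is_derive x v (fun y => G y + c) dG.
Proof. by move=> H; have := isd_add H (isd_cst x v c); rewrite addr0. Qed.
Lemma isd_subcr (c : R) G x v dG : is_derive x v G dG ->
  is_derive x v (fun y => G y - c) dG.
Proof. by move=> H; have := isd_sub H (isd_cst x v c); rewrite subr0. Qed.
End Tool2.

Section Tool3.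
Variables (R : realType) (p : nat).
Implicit Types (w : 'rV[R]_p).
Lemma isd_coord_ev w k j : is_derive w (ev R k) (fun y : 'rV[R]_p => y 0 j) (j == k)%:R.
Proof. by apply: is_derive_eq; first exact: isd_coord; rewrite evE. Qed.

Lemma isd_LF (c : 'I_p -> R) w k :
  is_derive w (ev R k) (fun y : 'rV[R]_p => \sum_(i < p) c i * y 0 i) (c k).
Proof.
apply: is_derive_eq.
  apply: isd_sum => i; apply: isd_mulc; exact: isd_coord_ev.
by rewrite sum_dR.
Qed.

Lemma isd_QF (c : 'I_p -> 'I_p -> R) w k :
  is_derive w (ev R k) (fun y : 'rV[R]_p => \sum_(i < p) \sum_(j < p) c i j * y 0 i * y 0 j)
    (\sum_(j < p) (c k j + c j k) * w 0 j).
Proof.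
apply: is_derive_eq.
  apply: isd_sum => i; apply: isd_sum => j; apply: isd_mul; last exact: isd_coord_ev.
  apply: isd_mulc; exact: isd_coord_ev.
cbv beta. under eq_bigr do rewrite big_split /= sum_dR.
rewrite big_split /=.
under [RHS]eq_bigr do rewrite mulrDl.
rewrite big_split /= addrC; congr (_ + _).
rewrite exchange_big /=; apply: eq_bigr => j _.
under eq_bigr do rewrite mulrA.
by rewrite sum_dR mulrC.
Qed.

Lemma isd_B1 q (c : 'I_q -> 'I_p -> R) (z : 'rV[R]_q) w k :
  is_derive w (ev R k) (fun y : 'rV[R]_p => \sum_(a < q) \sum_(i < p) c a i * y 0 i * z 0 a)
    (\sum_(a < q) c a k * z 0 a).
Proof.
apply: is_derive_eq.
  apply: isd_sum => a; apply: isd_sum => i; apply: isd_mulcr; apply: isd_mulc; exact: isd_coord_ev.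
cbv beta; apply: eq_bigr => a _.
by rewrite -mulr_suml sum_dR.
Qed.

Lemma isd_B2 q (c : 'I_p -> 'I_q -> R) (z : 'rV[R]_q) w k :
  is_derive w (ev R k) (fun y : 'rV[R]_p => \sum_(a < p) \sum_(i < q) c a i * z 0 i * y 0 a)
    (\sum_(i < q) c k i * z 0 i).
Proof.
apply: is_derive_eq.
  apply: isd_sum => a; apply: isd_sum => i; apply: isd_mulc; exact: isd_coord_ev.
cbv beta; under eq_bigr do rewrite -mulr_suml.
by rewrite sum_dR.
Qed.
End Tool3.

Ltac isd := repeat first [ apply: isd_cst | apply: isd_QF | apply: isd_B1 | apply: isd_B2
  | apply: isd_LF | apply: isd_coord_ev | apply: isd_coord
  | apply: isd_mulc | apply: isd_mulcr
  | apply: isd_addc | apply: isd_addcr | apply: isd_subcr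
  | apply: isd_sum => ? | apply: isd_add | apply: isd_sub | apply: isd_opp | apply: isd_mul
  | apply: isd_atom ].

End T1.
Import T1.

Module T2.
Set Implicit Arguments.
Unset Strict Implicit.
Lemma symE (R : realType) n (M : 'M[R]_n) i j : M^T = M -> M i j = M j i.
Proof. by move=> H; rewrite -{1}H mxE. Qed.

Lemma half_sym (R : realType) n (M : 'M[R]_n) (w : 'rV[R]_n) i : M^T = M ->
  2^-1 * \sum_(j < n) (M i j + M j i) * w 0 j = \sum_(j < n) M i j * w 0 j.
Proof.
move=> H; rewrite mulr_sumr; apply: eq_bigr => j _.
rewrite (symE j i H); by field.
Qed.

Section Chap.
Variables (R : realType) (m k : nat) (D : chap_data R m k).

Definition pR r (rd : 'rV[R]_m) (sd : 'rV[R]_k) (al : 'I_m) : R :=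
  \sum_(be < m) gRR D r al be * rd 0 be + \sum_(a < k) gSR D r a al * sd 0 a.
Definition pS r (rd : 'rV[R]_m) (sd : 'rV[R]_k) (a : 'I_k) : R :=
  \sum_(al < m) gSR D r a al * rd 0 al + \sum_(b < k) gSS D r a b * sd 0 b.
Definition Kin r (rd : 'rV[R]_m) (sd : 'rV[R]_k) : R :=
  2^-1 * (\sum_(al < m) \sum_(be < m) gRR D r al be * rd 0 al * rd 0 be)
  + (\sum_(a < k) \sum_(al < m) gSR D r a al * rd 0 al * sd 0 a)
  + 2^-1 * (\sum_(a < k) \sum_(b < k) gSS D r a b * sd 0 a * sd 0 b).
Definition dKin r (rd : 'rV[R]_m) (sd : 'rV[R]_k) (ga : 'I_m) : R :=
  2^-1 * (\sum_(al < m) \sum_(be < m) pd (fun x => gRR D x al be) ga r * rd 0 al * rd 0 be)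
  + (\sum_(a < k) \sum_(al < m) pd (fun x => gSR D x a al) ga r * rd 0 al * sd 0 a)
  + 2^-1 * (\sum_(a < k) \sum_(b < k) pd (fun x => gSS D x a b) ga r * sd 0 a * sd 0 b).

Lemma LagE r s rd sd : Lag D r s rd sd = Kin r rd sd - pot D r.
Proof. by []. Qed.

Lemma pd_Lag_rd r s rd sd al : (gRR D r)^T = gRR D r ->
  pd (fun v => Lag D r s v sd) al rd = pR r rd sd al.
Proof.
move=> H; apply: pdE; apply: is_derive_eq; first by rewrite /Lag; isd.
by rewrite half_sym.
Qed.

Lemma pd_Lag_sd r s rd sd b : (gSS D r)^T = gSS D r ->
  pd (fun w => Lag D r s rd w) b sd = pS r rd sd b.
Proof.
move=> H; apply: pdE; apply: is_derive_eq; first by rewrite /Lag; isd.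
by rewrite half_sym.
Qed.

Lemma pd_phi_rd r rd sd a al : pd (fun v => phi D r v sd a) al rd = Acon D r a al.
Proof. by apply: pdE; rewrite /phi; isd. Qed.

Lemma pd_phi_sd r rd sd a b : pd (fun w => phi D r rd w a) b sd = (a == b)%:R.
Proof. by apply: pdE; rewrite /phi; isd. Qed.

Lemma pd_Lag_s r s rd sd b : pd (fun y => Lag D r y rd sd) b s = 0.
Proof. by apply: pdE; exact: isd_cst. Qed.

Lemma pd_Lag_r r s rd sd al :
  (forall i j, differentiable (fun x => gRR D x i j) r) ->
  (forall i j, differentiable (fun x => gSR D x i j) r) ->
  (forall i j, differentiable (fun x => gSS D x i j) r) ->
  differentiable (pot D) r ->
  pd (fun x => Lag D x s rd sd) al r = dKin r rd sd al - pd (pot D) al r.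
Proof.
move=> d1 d2 d3 d4; apply: pdE; apply: is_derive_eq.
  rewrite /Lag; isd; exact: diff_derivable.
by [].
Qed.
End Chap.

End T2.
Import T2.

Module T3.
Set Implicit Arguments.
Unset Strict Implicit.
Lemma sum_0mul (R : realType) n (F : 'I_n -> R) : \sum_(i < n) 0 * F i = 0.
Proof. by rewrite big1 // => i _; rewrite mul0r. Qed.
Lemma sum_mul0 (R : realType) n (F : 'I_n -> R) : \sum_(i < n) F i * 0 = 0.
Proof. by rewrite big1 // => i _; rewrite mulr0. Qed.

Section Chap2.
Variables (R : realType) (m k : nat) (D : chap_data R m k).
Local Notation pR := (pR D). Local Notation pS := (pS D).
Local Notation Kin := (Kin D). Local Notation dKin := (dKin D).

Lemma pR_Z r (c : R) rd sd al : pR r (c *: rd) (c *: sd) al = c * pR r rd sd al.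
Proof.
rewrite /T2.pR mulrDr !mulr_sumr; congr (_ + _); apply: eq_bigr => i _; rewrite mxE; ring.
Qed.
Lemma pS_Z r (c : R) rd sd a : pS r (c *: rd) (c *: sd) a = c * pS r rd sd a.
Proof.
rewrite /T2.pS mulrDr !mulr_sumr; congr (_ + _); apply: eq_bigr => i _; rewrite mxE; ring.
Qed.
Lemma phi_Z r (c : R) rd sd a : phi D r (c *: rd) (c *: sd) a = c * phi D r rd sd a.
Proof.
rewrite /phi mulrDr !mulr_sumr mxE; congr (_ + _); apply: eq_bigr => i _; rewrite mxE; ring.
Qed.
Lemma Kin_Z r (c : R) rd sd : Kin r (c *: rd) (c *: sd) = c * c * Kin r rd sd.
Proof.
rewrite /T2.Kin !mulrDr !mulr_sumr; congr (_ + _ + _).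
- rewrite ?mulr_sumr; apply: eq_bigr => i _; rewrite ?mulr_sumr; apply: eq_bigr => j _; rewrite !mxE; ring.
- rewrite ?mulr_sumr; apply: eq_bigr => i _; rewrite ?mulr_sumr; apply: eq_bigr => j _; rewrite !mxE; ring.
- rewrite ?mulr_sumr; apply: eq_bigr => i _; rewrite ?mulr_sumr; apply: eq_bigr => j _; rewrite !mxE; ring.
Qed.
Lemma dKin_Z r (c : R) rd sd ga : dKin r (c *: rd) (c *: sd) ga = c * c * dKin r rd sd ga.
Proof.
rewrite /T2.dKin !mulrDr !mulr_sumr; congr (_ + _ + _).
- rewrite ?mulr_sumr; apply: eq_bigr => i _; rewrite ?mulr_sumr; apply: eq_bigr => j _; rewrite !mxE; ring.
- rewrite ?mulr_sumr; apply: eq_bigr => i _; rewrite ?mulr_sumr; apply: eq_bigr => j _; rewrite !mxE; ring.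
- rewrite ?mulr_sumr; apply: eq_bigr => i _; rewrite ?mulr_sumr; apply: eq_bigr => j _; rewrite !mxE; ring.
Qed.

Variable f : 'rV[R]_m -> R.

Definition LVc r wr ws := f r * f r * (Kin r wr ws - \sum_(a < k) pS r wr ws a * phi D r wr ws a) - pot D r.

Lemma LV_closed r s wr ws : (gSS D r)^T = gSS D r -> LV D f r s wr ws = LVc r wr ws.
Proof.
move=> H; rewrite /LV /LagW /phiW.
have E : forall w, Lag D r s (f r *: wr) (f r *: w) = f r * f r * Kin r wr w - pot D r.
  by move=> w; rewrite LagE Kin_Z.
rewrite E.
have dE : forall a, pd (fun w => Lag D r s (f r *: wr) (f r *: w)) a ws = f r * f r * pS r wr ws a.
  move=> a; rewrite (_ : (fun w => _) = (fun w => f r * f r * Kin r wr w - pot D r)); last first.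
    by apply/funext=> w; rewrite E.
  apply: pdE; apply: is_derive_eq; first by rewrite /T2.Kin; isd.
  by rewrite half_sym.
rewrite (eq_bigr (fun a => f r * f r * pS r wr ws a * (f r * phi D r wr ws a))); last by move=> a _; rewrite dE phi_Z.
have -> : \sum_(a < k) f r * f r * pS r wr ws a * (f r * phi D r wr ws a) =
   f r * (f r * f r * \sum_(a < k) pS r wr ws a * phi D r wr ws a).
  rewrite !mulr_sumr; apply: eq_bigr => a _; ring.
rewrite [(f r)^-1 * _]mulrA /LVc; case: (eqVneq (f r) 0) => [->|F0].
  by rewrite invr0 !mul0r subr0.
rewrite mulVf // mul1r; ring.
Qed.

Lemma pd_LV_wr r s wr ws al : (gRR D r)^T = gRR D r -> (gSS D r)^T = gSS D r ->
  pd (fun w => LV D f r s w ws) al wr = f r * f r * (pR r wr ws al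
     - \sum_(a < k) (pS r wr ws a * Acon D r a al + phi D r wr ws a * gSR D r a al)).
Proof.
move=> H1 H2; rewrite (_ : (fun w => _) = (fun w => LVc r w ws)); last first.
  by apply/funext => w; rewrite LV_closed.
apply: pdE; apply: is_derive_eq; first by rewrite /LVc /T2.Kin; isd.
by rewrite half_sym.
Qed.

Lemma pd_LV_ws r s wr ws b : (gSS D r)^T = gSS D r ->
  pd (fun w => LV D f r s wr w) b ws = - (f r * f r) * \sum_(a < k) phi D r wr ws a * gSS D r a b.
Proof.
move=> H2; rewrite (_ : (fun w => _) = (fun w => LVc r wr w)); last first.
  by apply/funext => w; rewrite LV_closed.
apply: pdE; apply: is_derive_eq; first by rewrite /LVc /T2.Kin; isd.
rewrite half_sym //; cbv beta; rewrite big_split /= sum_dR.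
rewrite [X in _ * (X - _)](_ : _ = pS r wr ws b) //; ring.
Qed.

Lemma pd_LV_s r s wr ws b : pd (fun y => LV D f r y wr ws) b s = 0.
Proof.
rewrite (_ : (fun y => LV D f r y wr ws) = (fun _ => LV D f r s wr ws)) //.
apply: pdE; exact: isd_cst.
Qed.

Lemma pd_LV_r r s wr ws al (U : set 'rV[R]_m) : open U -> U r -> data_regular D U ->
  differentiable f r -> (forall a, phi D r wr ws a = 0) ->
  pd (fun x => LV D f x s wr ws) al r =
  f r * f r * (dKin r wr ws al - \sum_(a < k) pS r wr ws a *
       \sum_(be < m) pd (fun x => Acon D x a be) al r * wr 0 be)
  + (f r * pd f al r + f r * pd f al r) * Kin r wr ws - pd (pot D) al r.
Proof.
move=> oU Ur reg df ph0.
have nU : \forall x \near r, U x by apply: open_nbhs_nbhs.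
rewrite /pd (near_eq_derive _ (g := fun x => LVc x wr ws)); last first.
  near=> x; have Ux : U x by near: x; exact: nU.
  by rewrite LV_closed //; have [_ [H _]] := reg x Ux.
have [_ [_ [d1 [d2 [d3 [d4 d5]]]]]] := reg r Ur.
apply: (@pdE _ _ (fun x => LVc x wr ws)); apply: is_derive_eq.
  rewrite /LVc /T2.Kin; isd; exact: diff_derivable.
cbv beta.
have phE : phi D r wr ws = fun _ => 0 by apply/funext => a; exact: ph0.
rewrite phE; cbv beta.
rewrite big_split /= sum_0mul sum_mul0 subr0.
rewrite /T2.dKin /T2.Kin /pd; ring.
Unshelve. all: by end_near.
Qed.
End Chap2.

End T3.
Import T3.

Module T4.
Set Implicit Arguments.
Unset Strict Implicit.
Section MxH.
Variable R : realType.
Lemma eD p q (X Y : 'M[R]_(p,q)) i j : (X + Y) i j = X i j + Y i j. Proof. by rewrite mxE. Qed.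
Lemma eB p q (X Y : 'M[R]_(p,q)) i j : (X - Y) i j = X i j - Y i j. Proof. by rewrite !mxE. Qed.
Lemma eN p q (X : 'M[R]_(p,q)) i j : (- X) i j = - X i j. Proof. by rewrite mxE. Qed.
Lemma eT p q (X : 'M[R]_(p,q)) i j : X^T j i = X i j. Proof. by rewrite mxE. Qed.
Lemma eM1 p q (x : 'rV[R]_p) (M : 'M[R]_(p,q)) j : (x *m M) 0 j = \sum_(i < p) M i j * x 0 i.
Proof. by rewrite mxE; apply: eq_bigr => i _; rewrite mulrC. Qed.
Lemma qf p q (M : 'M[R]_(p,q)) (x : 'rV[R]_p) (y : 'rV[R]_q) :
  (x *m M *m y^T) 0 0 = \sum_(i < p) \sum_(j < q) M i j * x 0 i * y 0 j.
Proof.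
rewrite mxE.
under eq_bigr do rewrite eT eM1 mulr_suml.
by rewrite exchange_big.
Qed.
End MxH.

Section Alg.
Variables (R : realType) (m k : nat) (D : chap_data R m k).

Definition sdA r (rd : 'rV[R]_m) : 'rV[R]_k := - (rd *m (Acon D r)^T).
Definition Gc r : 'M[R]_m := gRR D r - (gSR D r)^T *m Acon D r - (Acon D r)^T *m gSR D r
   + (Acon D r)^T *m gSS D r *m Acon D r.
Definition Mm r : 'M[R]_(k,m) := gSR D r - gSS D r *m Acon D r.

Lemma Kin_mx r rd sd : Kin D r rd sd = 2^-1 * (rd *m gRR D r *m rd^T) 0 0
  + (sd *m gSR D r *m rd^T) 0 0 + 2^-1 * (sd *m gSS D r *m sd^T) 0 0.
Proof.
rewrite !qf /T2.Kin; congr (_ + _ + _).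
apply: eq_bigr => a _; apply: eq_bigr => i _; ring.
Qed.

Lemma KinC r rd : Kin D r rd (sdA r rd) = 2^-1 * (rd *m Gc r *m rd^T) 0 0.
Proof.
rewrite Kin_mx /sdA /Gc.
set A := Acon D r; set g := gRR D r; set S := gSR D r; set Q := gSS D r.
have E1 : (- (rd *m A^T)) *m S *m rd^T = - (rd *m A^T *m S *m rd^T) by rewrite !mulNmx.
have E2 : (- (rd *m A^T)) *m Q *m (- (rd *m A^T))^T = rd *m A^T *m Q *m A *m rd^T.
  by rewrite !mulNmx linearN /= mulmxN opprK trmx_mul trmxK !mulmxA.
have E3 : (rd *m S^T *m A *m rd^T) 0 0 = (rd *m A^T *m S *m rd^T) 0 0.
  by rewrite -[RHS]eT !trmx_mul !trmxK !mulmxA.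
rewrite E1 E2 !(mulmxDr, mulmxDl, mulmxN, mulNmx) !mulmxA !(eD, eN) E3; by field.
Qed.

Lemma Gc_sym r : (gRR D r)^T = gRR D r -> (gSS D r)^T = gSS D r -> (Gc r)^T = Gc r.
Proof.
move=> H1 H2; rewrite /Gc !linearD /= !linearN /= !trmx_mul !trmxK H1 H2 !mulmxA.
by congr (_ + _); exact: addrAC.
Qed.

Lemma lc_E r v : lc D r v = 2^-1 * \sum_(i < m) \sum_(j < m) Gc r i j * v 0 i * v 0 j - pot D r.
Proof. by rewrite /lc LagE -/(sdA r v) KinC qf. Qed.

Lemma Gmat_E r : (gRR D r)^T = gRR D r -> (gSS D r)^T = gSS D r -> Gmat D r = Gc r.
Proof.
move=> H1 H2; apply/matrixP => al be; rewrite mxE.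
have -> : (fun v => pd (lc D r) al v) = (fun v => 2^-1 * \sum_(j < m) (Gc r al j + Gc r j al) * v 0 j).
  apply/funext => v.
  rewrite (_ : lc D r = fun v => 2^-1 * \sum_(i < m) \sum_(j < m) Gc r i j * v 0 i * v 0 j - pot D r); last first.
    by apply/funext => w; rewrite lc_E.
  by apply: pdE; isd.
apply: pdE; apply: is_derive_eq; first by isd.
rewrite (symE be al (Gc_sym H1 H2)); by field.
Qed.

Lemma pR_mx r rd sd al : pR D r rd sd al = (rd *m (gRR D r)^T + sd *m gSR D r) 0 al.
Proof.
rewrite eD !eM1 /T2.pR; congr (_ + _); apply: eq_bigr => i _; rewrite ?eT mulrC //.
Qed.
Lemma pS_mx r rd sd a : pS D r rd sd a = (rd *m (gSR D r)^T + sd *m (gSS D r)^T) 0 a.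
Proof.
rewrite eD !eM1 /T2.pS; congr (_ + _); apply: eq_bigr => i _; rewrite ?eT mulrC //.
Qed.

Lemma P_G r rd al :
  pR D r rd (sdA r rd) al - \sum_(a < k) pS D r rd (sdA r rd) a * Acon D r a al
  = \sum_(be < m) Gc r al be * rd 0 be.
Proof.
have -> : \sum_(a < k) pS D r rd (sdA r rd) a * Acon D r a al =
   ((rd *m (gSR D r)^T + sdA r rd *m (gSS D r)^T) *m Acon D r) 0 al.
  by rewrite eM1; apply: eq_bigr => a _; rewrite pS_mx mulrC.
rewrite pR_mx -eB.
have -> : rd *m (gRR D r)^T + sdA r rd *m gSR D r -
    (rd *m (gSR D r)^T + sdA r rd *m (gSS D r)^T) *m Acon D r = rd *m (Gc r)^T.
  rewrite /sdA /Gc !linearD /= !linearN /= !trmx_mul !trmxK.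
  rewrite !(mulmxDr, mulmxDl, mulmxN, mulNmx) !mulmxA.
  by rewrite opprD opprK addrA.
by rewrite eM1; apply: eq_bigr => be _; rewrite eT.
Qed.
End Alg.

End T4.
Import T4.

Module T5.
Set Implicit Arguments.
Unset Strict Implicit.
Lemma sum2_prod (R : realType) n p (a : 'I_n -> R) (b : 'I_p -> R) :
  \sum_(i < n) \sum_(j < p) a i * b j = (\sum_(i < n) a i) * (\sum_(j < p) b j).
Proof. by rewrite big_distrl /=; apply: eq_bigr => i _; rewrite big_distrr. Qed.

Section Alg2.
Variables (R : realType) (m k : nat) (D : chap_data R m k).

Lemma pS_M r rd a : pS D r rd (sdA D r rd) a = \sum_(ga < m) Mc D r a ga * rd 0 ga.
Proof.
rewrite pS_mx.
have -> : rd *m (gSR D r)^T + sdA D r rd *m (gSS D r)^T = rd *m (Mm D r)^T.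
  by rewrite /sdA /Mm linearD /= linearN /= trmx_mul mulmxDr mulmxN mulNmx mulmxA.
by rewrite eM1; apply: eq_bigr => ga _; rewrite eT /Mm /Mc eB mxE.
Qed.

Lemma Kin2 r rd : 2 * Kin D r rd (sdA D r rd) = \sum_(i < m) \sum_(j < m) Gc D r i j * rd 0 i * rd 0 j.
Proof. rewrite KinC qf; by field. Qed.

Lemma K_contr r (al be ga : 'I_m) : Gmat D r \in unitmx ->
  \sum_(mu < m) Kc D r mu al be * Gmat D r mu ga = \sum_(b < k) Mc D r b ga * Bc D r b al be.
Proof.
move=> U; rewrite /Kc.
have inv : forall ep, \sum_(mu < m) invmx (Gmat D r) ep mu * Gmat D r mu ga = (ep == ga)%:R.
  by move=> ep; have := mulVmx U => /matrixP/(_ ep ga); rewrite !mxE.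
under eq_bigr do rewrite mulr_suml.
rewrite exchange_big /=; apply: eq_bigr => b _.
under eq_bigr do rewrite mulr_suml.
rewrite exchange_big /=.
rewrite (eq_bigr (fun ep => Mc D r b ep * Bc D r b al be * (ep == ga)%:R)); last first.
  move=> ep _; rewrite -inv mulr_sumr; apply: eq_bigr => mu _; ring.
by rewrite sum_dR.
Qed.

Lemma Zid (f : 'rV[R]_m -> R) r (v : 'rV[R]_m) al : Gmat D r \in unitmx ->
  (forall nu de, f_condition D f r al nu de) ->
  (\sum_(ga < m) pd f ga r * v 0 ga) * (\sum_(nu < m) Gmat D r al nu * v 0 nu)
  - pd f al r * (\sum_(be < m) \sum_(ga < m) Gmat D r be ga * v 0 be * v 0 ga)
  = f r * \sum_(a < k) (\sum_(ga < m) Mc D r a ga * v 0 ga) * (\sum_(be < m) Bc D r a al be * v 0 be).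
Proof.
move=> U fc.
set G := Gmat D r.
pose a ga := pd f ga r * v 0 ga.
pose b nu := G al nu * v 0 nu.
pose Q := \sum_(be < m) \sum_(ga < m) G be ga * v 0 be * v 0 ga.
pose W := \sum_(ga < m) \sum_(be < m) \sum_(c < k) Mc D r c ga * Bc D r c al be * v 0 ga * v 0 be.
have C : \sum_(de < m) \sum_(nu < m) (pd f de r * G al nu + pd f nu r * G al de
              - 2 * pd f al r * G de nu) * v 0 de * v 0 nu
       = \sum_(de < m) \sum_(nu < m) (f r * ((\sum_(mu < m) Kc D r mu al de * G mu nu)
              + \sum_(mu < m) Kc D r mu al nu * G mu de)) * v 0 de * v 0 nu.
  by apply: eq_bigr => de _; apply: eq_bigr => nu _; rewrite fc.
have L : \sum_(de < m) \sum_(nu < m) (pd f de r * G al nu + pd f nu r * G al de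
              - 2 * pd f al r * G de nu) * v 0 de * v 0 nu
   = (\sum_(de < m) \sum_(nu < m) a de * b nu) + (\sum_(de < m) \sum_(nu < m) a nu * b de)
     - 2 * pd f al r * Q.
  rewrite /Q mulr_sumr -big_split -sumrB; apply: eq_bigr => de _.
  rewrite mulr_sumr -big_split -sumrB; apply: eq_bigr => nu _; rewrite /a /b /=; ring.
have R1 : \sum_(de < m) \sum_(nu < m) (f r * ((\sum_(mu < m) Kc D r mu al de * G mu nu)
              + \sum_(mu < m) Kc D r mu al nu * G mu de)) * v 0 de * v 0 nu
   = f r * ((\sum_(de < m) \sum_(nu < m) \sum_(c < k) Mc D r c nu * Bc D r c al de * v 0 nu * v 0 de)
     + W).
  rewrite /W -big_split mulr_sumr; apply: eq_bigr => de _.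
  rewrite -big_split mulr_sumr; apply: eq_bigr => nu _.
  rewrite !K_contr // -!big_split /= !(mulr_sumr, mulr_suml); apply: eq_bigr => c _ /=; ring.
have E1 : \sum_(de < m) \sum_(nu < m) \sum_(c < k) Mc D r c nu * Bc D r c al de * v 0 nu * v 0 de = W.
  by rewrite /W exchange_big.
have E2 : \sum_(c < k) (\sum_(ga < m) Mc D r c ga * v 0 ga) * (\sum_(be < m) Bc D r c al be * v 0 be) = W.
  rewrite /W; under eq_bigr do rewrite -sum2_prod.
  rewrite exchange_big /=; apply: eq_bigr => ga _.
  rewrite exchange_big /=; apply: eq_bigr => be _.
  apply: eq_bigr => c _; ring.
have E3 : \sum_(de < m) \sum_(nu < m) a nu * b de = \sum_(de < m) \sum_(nu < m) a de * b nu.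
  by rewrite exchange_big.
move: C; rewrite L R1 E1 E3 sum2_prod => C.
rewrite -/Q.
rewrite (_ : \sum_(ga < m) pd f ga r * v 0 ga = \sum_(ga < m) a ga) //.
rewrite (_ : \sum_(nu < m) G al nu * v 0 nu = \sum_(nu < m) b nu) //.
rewrite E2.
have two : (2:R) != 0 by rewrite pnatr_eq0.
apply: (mulfI two).
have -> : 2 * ((\sum_(ga < m) a ga) * (\sum_(nu < m) b nu) - pd f al r * Q) =
  (\sum_(ga < m) a ga) * (\sum_(nu < m) b nu) + (\sum_(ga < m) a ga) * (\sum_(nu < m) b nu)
  - 2 * pd f al r * Q by ring.
by rewrite C; ring.
Qed.
End Alg2.

End T5.
Import T5.

Module T6.
Set Implicit Arguments.
Unset Strict Implicit.
Section Calc.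
Variable R : realType.

Lemma isd_ex (V : normedModType R) (F : V -> R) x v df : is_derive x v F df -> derivable F x v.
Proof. by case. Qed.

Lemma dcompT p (G : 'rV[R]_p -> R) (c : R -> 'rV[R]_p) t :
  differentiable G (c t) -> differentiable c t -> derivable (fun u => G (c u)) t 1.
Proof. by move=> dG dc; apply: diff_derivable; exact: differentiable_comp. Qed.

Lemma dcoordT p (c : R -> 'rV[R]_p) t i :
  differentiable c t -> derivable (fun u => c u 0 i) t 1.
Proof. by move=> dc; apply: (@dcompT p (fun y => y 0 i) c) => //; exact: differentiable_coord. Qed.

Lemma chainT p (G : 'rV[R]_p -> R) (c : R -> 'rV[R]_p) t :
  differentiable G (c t) -> differentiable c t ->
  'D_1 (fun u => G (c u)) t = \sum_(i < p) pd G i (c t) * (derive1 c t) 0 i.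
Proof.
move=> dG dc.
rewrite deriveE; last exact: differentiable_comp.
rewrite (diff_comp dc dG) /= derive1E (deriveE (f:=c)) //.
rewrite [in LHS](row_sum_delta ('d c t 1)) linear_sum; apply: eq_bigr => i _.
by rewrite linearZ /= /pd /ev (deriveE (f:=G)) // mulrC.
Qed.

Lemma cst_itv (h : R -> R) (I : set R) : is_interval I ->
  (forall t, I t -> derivable h t 1 /\ 'D_1 h t = 0) ->
  forall t0 t, I t0 -> I t -> h t = h t0.
Proof.
move=> iI H.
have key : forall a b, a <= b -> I a -> I b -> h b = h a.
  move=> a b ab Ia Ib.
  have inI : forall x, a <= x <= b -> I x by move=> x; exact: iI.
  have d : forall x, x \in `]a, b[%R -> is_derive x 1 h 0.
    move=> x; rewrite in_itv /= => /andP[ax xb].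
    have [d0 d1] := H x (inI x ltac:(by rewrite !ltW)).
    by apply: DeriveDef.
  have cc : {within `[a, b], continuous h}.
    apply: continuous_in_subspaceT => x; rewrite inE /= in_itv /= => xab.
    have [d0 _] := H x (inI x xab).
    exact/differentiable_continuous/derivable1_diffP.
  have [c _ E] := MVT_segment ab d cc.
  by apply/eqP; rewrite -subr_eq0 E mul0r.
move=> t0 t It0 It; case: (leP t0 t) => [le|/ltW le].
  exact: key.
by apply/esym/key.
Qed.
End Calc.

Section Chap3.
Variables (R : realType) (m k : nat) (D : chap_data R m k) (f : 'rV[R]_m -> R).

Lemma pd_LagW_ws r s wr ws a : (gSS D r)^T = gSS D r ->
  pd (fun w => LagW D f r s wr w) a ws = f r * f r * pS D r wr ws a.
Proof.
move=> H; rewrite /LagW.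
rewrite (_ : (fun w => _) = (fun w => f r * f r * Kin D r wr w - pot D r)); last first.
  by apply/funext=> w; rewrite LagE Kin_Z.
apply: pdE; apply: is_derive_eq; first by rewrite /T2.Kin; isd.
by rewrite half_sym.
Qed.

Lemma gtilde_E r s wr ws : (gSS D r)^T = gSS D r ->
  gtilde D f r s wr ws = (f r * f r) *: gSS D r.
Proof.
move=> H; apply/matrixP => a b; rewrite !mxE.
rewrite (_ : (fun w => _) = (fun w => f r * f r * pS D r wr w a)); last first.
  by apply/funext => w; rewrite pd_LagW_ws.
by apply: pdE; apply: is_derive_eq; first (rewrite /T2.pS; isd).
Qed.

Lemma sum_scale2 (c : R) (x : 'I_k -> R) (y : 'I_k -> 'I_m -> R) (z : 'rV[R]_m) :
  \sum_(a < k) (c * x a) * \sum_(be < m) y a be * (c *: z) 0 be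
  = c * c * \sum_(a < k) x a * \sum_(be < m) y a be * z 0 be.
Proof.
rewrite mulr_sumr; apply: eq_bigr => a _.
rewrite !mulr_sumr; apply: eq_bigr => be _; rewrite mxE; ring.
Qed.
End Chap3.

End T6.
Import T6.

Module T7.
Set Implicit Arguments.
Unset Strict Implicit.
Lemma alg_core (R : realType) k (F X DL dF Pc Kn fal : R) (pS Y A dA SdA SB : 'I_k -> R) :
  (forall a, dA a - SdA a = SB a) ->
  dF * Pc - fal * (2 * Kn) = F * \sum_(a < k) pS a * SB a ->
  (F * (X - \sum_(a < k) (pS a * dA a + A a * Y a)) + Pc * dF)
    - (F * DL - F * \sum_(a < k) pS a * SdA a + 2 * fal * Kn)
  = F * (X - \sum_(a < k) Y a * A a - DL).
Proof.
move=> H Hz.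
have E : \sum_(a < k) pS a * dA a = \sum_(a < k) pS a * SdA a + \sum_(a < k) pS a * SB a.
  by rewrite -big_split; apply: eq_bigr => a _ /=; rewrite -H; ring.
rewrite big_split /= E.
rewrite (_ : \sum_(a < k) A a * Y a = \sum_(a < k) Y a * A a); last by apply: eq_bigr => a _; ring.
rewrite (_ : Pc * dF = fal * (2 * Kn) + F * \sum_(a < k) pS a * SB a); last by rewrite -Hz; ring.
ring.
Qed.

Lemma phi_cstr (R : realType) m k (D : chap_data R m k) r rd sd :
  (forall a, phi D r rd sd a = 0) -> sd = sdA D r rd.
Proof.
move=> H; apply/matrixP => i a; rewrite ord1 /sdA eN eM1.
have := H a; rewrite /phi => /eqP; rewrite addr_eq0 => /eqP ->.
by congr (- _); apply: eq_bigr => j _; rewrite eT.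
Qed.


End T7.
Import T7.

Theorem theorem7 (R : realType) (m k : nat) (D : chap_data R m k)
  (U : set 'rV[R]_m) (f : 'rV[R]_m -> R) :
  (k < m + k)%N ->
  open U ->
  data_regular D U ->
  C1_on U f ->
  (forall r, U r -> f r != 0) ->
  (forall r, U r -> Gmat D r \in unitmx) ->
  (forall r, U r -> forall al nu de : 'I_m, f_condition D f r al nu de) ->
  (forall r s wr ws, U r -> gtilde D f r s wr ws \in unitmx) ->
  forall (I : set R) (t0 : R) (rc : R -> 'rV[R]_m) (sc : R -> 'rV[R]_k),
    open I -> is_interval I -> I t0 ->
    (forall t, I t -> U (rc t) /\
       differentiable rc t /\ differentiable (derive1 rc) t /\
       differentiable sc t /\ differentiable (derive1 sc) t) ->
    (nonholonomic D I rc sc <->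
       (LV_equations D f I rc sc /\
        forall a : 'I_k, phiW D f (rc t0) (omR f rc t0) (omS f rc sc t0) a = 0)).
Proof.
move=> km oU reg C1f fnz Gunit fcond gtunit I t0 rc sc oI iI It0 hc.
have Ur : forall t, I t -> U (rc t) by move=> t /hc [].
have drc : forall t, I t -> differentiable rc t by move=> t /hc [_ []].
have ddrc : forall t, I t -> differentiable (derive1 rc) t by move=> t /hc [_ [_ []]].
have dsc : forall t, I t -> differentiable sc t by move=> t /hc [_ [_ [_ []]]].
have ddsc : forall t, I t -> differentiable (derive1 sc) t by move=> t /hc [_ [_ [_ [_ ]]]].
have sym1 : forall t, I t -> (gRR D (rc t))^T = gRR D (rc t) by move=> t /Ur /reg [].
have sym2 : forall t, I t -> (gSS D (rc t))^T = gSS D (rc t) by move=> t /Ur /reg [_ []].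
have dRR : forall t, I t -> forall i j, differentiable (fun x => gRR D x i j) (rc t).
  by move=> t /Ur /reg [_ [_ []]].
have dSR : forall t, I t -> forall i j, differentiable (fun x => gSR D x i j) (rc t).
  by move=> t /Ur /reg [_ [_ [_ []]]].
have dSS : forall t, I t -> forall i j, differentiable (fun x => gSS D x i j) (rc t).
  by move=> t /Ur /reg [_ [_ [_ [_ []]]]].
have dA : forall t, I t -> forall i j, differentiable (fun x => Acon D x i j) (rc t).
  by move=> t /Ur /reg [_ [_ [_ [_ [_ []]]]]].
have dpot : forall t, I t -> differentiable (pot D) (rc t).
  by move=> t /Ur /reg [_ [_ [_ [_ [_ []]]]]].
have df : forall t, I t -> differentiable f (rc t) by move=> t /Ur /C1f [].
have Fnz : forall t, I t -> f (rc t) != 0 by move=> t /Ur /fnz.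
have nI : forall t, I t -> \forall u \near t, I u by move=> t It; apply: open_nbhs_nbhs.
have dvF : forall t, I t -> derivable (fun u => f (rc u)) t 1.
  by move=> t It; exact: (dcompT (df t It) (drc t It)).
have dvRR : forall t, I t -> forall i j, derivable (fun u => gRR D (rc u) i j) t 1.
  by move=> t It i j; apply: (@dcompT _ _ (fun x => gRR D x i j)); [exact: dRR | exact: drc].
have dvSR : forall t, I t -> forall i j, derivable (fun u => gSR D (rc u) i j) t 1.
  by move=> t It i j; apply: (@dcompT _ _ (fun x => gSR D x i j)); [exact: dSR | exact: drc].
have dvSS : forall t, I t -> forall i j, derivable (fun u => gSS D (rc u) i j) t 1.
  by move=> t It i j; apply: (@dcompT _ _ (fun x => gSS D x i j)); [exact: dSS | exact: drc].
have dvA : forall t, I t -> forall i j, derivable (fun u => Acon D (rc u) i j) t 1.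
  by move=> t It i j; apply: (@dcompT _ _ (fun x => Acon D x i j)); [exact: dA | exact: drc].
have dvv : forall t, I t -> forall i, derivable (fun u => derive1 rc u 0 i) t 1.
  by move=> t It i; apply: dcoordT; exact: ddrc.
have dvsv : forall t, I t -> forall i, derivable (fun u => derive1 sc u 0 i) t 1.
  by move=> t It i; apply: dcoordT; exact: ddsc.
have omRE : forall u, omR f rc u = (f (rc u))^-1 *: derive1 rc u by [].
have omSE : forall u, omS f rc sc u = (f (rc u))^-1 *: derive1 sc u by [].
have A1 : forall u, I u -> forall al,
  pd (fun w => LV D f (rc u) (sc u) w (omS f rc sc u)) al (omR f rc u) =
  f (rc u) * (pR D (rc u) (derive1 rc u) (derive1 sc u) al
    - \sum_(a < k) (pS D (rc u) (derive1 rc u) (derive1 sc u) a * Acon D (rc u) a al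
       + phi D (rc u) (derive1 rc u) (derive1 sc u) a * gSR D (rc u) a al)).
  move=> u Iu al; rewrite pd_LV_wr ?sym1 ?sym2 // omRE omSE pR_Z.
  under eq_bigr do rewrite pS_Z phi_Z -!mulrA -mulrDr.
  rewrite -mulr_sumr; have := Fnz u Iu; set F := f (rc u) => FF.
  by field.
have A2 : forall u, I u -> forall b,
  pd (fun w => LV D f (rc u) (sc u) (omR f rc u) w) b (omS f rc sc u) =
  - (f (rc u) * \sum_(a < k) phi D (rc u) (derive1 rc u) (derive1 sc u) a * gSS D (rc u) a b).
  move=> u Iu b; rewrite pd_LV_ws ?sym2 // omRE omSE.
  under eq_bigr do rewrite phi_Z -mulrA.
  rewrite -mulr_sumr; have := Fnz u Iu; set F := f (rc u) => FF.
  by field.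
have A3 : forall t, I t -> (forall a, phi D (rc t) (derive1 rc t) (derive1 sc t) a = 0) -> forall al,
  f (rc t) * pd (fun x => LV D f x (sc t) (omR f rc t) (omS f rc sc t)) al (rc t) =
  f (rc t) * (dKin D (rc t) (derive1 rc t) (derive1 sc t) al - pd (pot D) al (rc t))
  - f (rc t) * \sum_(a < k) pS D (rc t) (derive1 rc t) (derive1 sc t) a *
        \sum_(be < m) pd (fun x => Acon D x a be) al (rc t) * derive1 rc t 0 be
  + 2 * pd f al (rc t) * Kin D (rc t) (derive1 rc t) (derive1 sc t).
  move=> t It H al.
  rewrite (pd_LV_r (sc t) al oU (Ur t It) reg (df t It)); last first.
    by move=> a; rewrite omRE omSE phi_Z H mulr0.
  rewrite omRE omSE dKin_Z Kin_Z.
  under eq_bigr do rewrite pS_Z.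
  rewrite sum_scale2; have := Fnz t It; set F := f (rc t) => FF.
  by field.
have dvpR : forall t, I t -> forall al, derivable (fun u => pR D (rc u) (derive1 rc u) (derive1 sc u) al) t 1.
  move=> t It al; rewrite /T2.pR; apply: isd_ex.
  apply: isd_add; apply: isd_sum => i; apply: isd_mul; apply: isd_atom.
  - exact: (dvRR _ It).
  - exact: (dvv _ It).
  - exact: (dvSR _ It).
  - exact: (dvsv _ It).
have dvpS : forall t, I t -> forall a, derivable (fun u => pS D (rc u) (derive1 rc u) (derive1 sc u) a) t 1.
  move=> t It al; rewrite /T2.pS; apply: isd_ex.
  apply: isd_add; apply: isd_sum => i; apply: isd_mul; apply: isd_atom.
  - exact: (dvSR _ It).
  - exact: (dvv _ It).
  - exact: (dvSS _ It).
  - exact: (dvsv _ It).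
have dvph : forall t, I t -> forall a, derivable (fun u => phi D (rc u) (derive1 rc u) (derive1 sc u) a) t 1.
  move=> t It al; rewrite /phi; apply: isd_ex.
  apply: isd_add; [apply: isd_atom | apply: isd_sum => i; apply: isd_mul; apply: isd_atom].
  - exact: (dvsv _ It).
  - exact: (dvA _ It).
  - exact: (dvv _ It).
have chainA : forall t, I t -> forall a al,
  'D_1 (fun u => Acon D (rc u) a al) t =
  \sum_(ga < m) pd (fun x => Acon D x a al) ga (rc t) * derive1 rc t 0 ga.
  by move=> t It a al; rewrite (@chainT R m (fun x => Acon D x a al) rc t (dA t It a al) (drc t It)).
have chainF : forall t, I t ->
  'D_1 (fun u => f (rc u)) t = \sum_(ga < m) pd f ga (rc t) * derive1 rc t 0 ga.
  by move=> t It; rewrite (@chainT R m f rc t (df t It) (drc t It)).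
pose Cstr := forall t, I t -> forall a, phi D (rc t) (derive1 rc t) (derive1 sc t) a = 0.
have KEY : Cstr -> forall t, I t -> forall al,
  derive1 (fun u => pd (fun w => LV D f (rc u) (sc u) w (omS f rc sc u)) al (omR f rc u)) t
  - f (rc t) * pd (fun x => LV D f x (sc t) (omR f rc t) (omS f rc sc t)) al (rc t)
  = f (rc t) * ('D_1 (fun u => pR D (rc u) (derive1 rc u) (derive1 sc u) al) t
     - \sum_(a < k) 'D_1 (fun u => pS D (rc u) (derive1 rc u) (derive1 sc u) a) t * Acon D (rc t) a al
     - (dKin D (rc t) (derive1 rc t) (derive1 sc t) al - pd (pot D) al (rc t))).
  move=> Cs t It al.
  rewrite A3 //; last exact: Cs.
  rewrite derive1E (near_eq_derive (f := fun u => pd (fun w => LV D f (rc u) (sc u) w (omS f rc sc u)) al (omR f rc u)) (g := fun u => f (rc u) * (pR D (rc u) (derive1 rc u) (derive1 sc u) al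
     - \sum_(a < k) pS D (rc u) (derive1 rc u) (derive1 sc u) a * Acon D (rc u) a al))); last first.
    near=> u; have Iu : I u by near: u; exact: nI.
    cbv beta; rewrite A1 //; congr (_ * (_ - _)); apply: eq_bigr => a _.
    by rewrite Cs // mul0r addr0.
  have HD := isd_mul (isd_atom (dvF t It)) (isd_sub (isd_atom (dvpR t It al))
     (isd_sum (fun a => isd_mul (isd_atom (dvpS t It a)) (isd_atom (dvA t It a al))))).
  rewrite (@derive_val _ _ _ _ _ _ _ HD).
  apply: (@alg_core _ _ _ _ _ _ _ _ _ _ _ _ _ _ (fun a => \sum_(be < m) Bc D (rc t) a al be * derive1 rc t 0 be)).
    move=> a; rewrite chainA // -sumrB; apply: eq_bigr => be _; by rewrite /Bc mulrBl.
  rewrite chainF // (phi_cstr (Cs t It)) P_G Kin2.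
  under [X in _ = _ * X]eq_bigr do rewrite pS_M.
  rewrite -(Gmat_E (sym1 t It) (sym2 t It)).
  apply: Zid; [exact: (Gunit _ (Ur t It)) | exact: (fcond _ (Ur t It) al)].
have XNH : forall t, I t -> forall al,
  derive1 (fun u => pd (fun v' => Lag D (rc u) (sc u) v' (derive1 sc u)) al (derive1 rc u)) t
  = 'D_1 (fun u => pR D (rc u) (derive1 rc u) (derive1 sc u) al) t.
  move=> t It al; rewrite derive1E; apply: near_eq_derive.
  near=> u; have Iu : I u by near: u; exact: nI.
  by cbv beta; rewrite pd_Lag_rd // sym1.
have YNH : forall t, I t -> forall b,
  derive1 (fun u => pd (fun w => Lag D (rc u) (sc u) (derive1 rc u) w) b (derive1 sc u)) t
  = 'D_1 (fun u => pS D (rc u) (derive1 rc u) (derive1 sc u) b) t.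
  move=> t It b; rewrite derive1E; apply: near_eq_derive.
  near=> u; have Iu : I u by near: u; exact: nI.
  by cbv beta; rewrite pd_Lag_sd // sym2.
have LNH : forall t, I t -> forall al,
  pd (fun x => Lag D x (sc t) (derive1 rc t) (derive1 sc t)) al (rc t)
  = dKin D (rc t) (derive1 rc t) (derive1 sc t) al - pd (pot D) al (rc t).
  by move=> t It al; rewrite pd_Lag_r //; [exact: dRR | exact: dSR | exact: dSS | exact: dpot].
have phi0E : forall a, phiW D f (rc t0) (omR f rc t0) (omS f rc sc t0) a
    = phi D (rc t0) (derive1 rc t0) (derive1 sc t0) a.
  by move=> a; rewrite /phiW omRE omSE !scalerA mulfV ?Fnz // !scale1r.
split.
- case=> Cs [lam Hlam]; split; last by move=> a; rewrite phi0E Cs.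
  move=> t It; have [Hr Hs] := Hlam t It; split.
  + move=> al; rewrite KEY //.
    have HY : forall a, 'D_1 (fun u => pS D (rc u) (derive1 rc u) (derive1 sc u) a) t = lam a t.
      move=> b; have := Hs b; rewrite YNH // pd_Lag_s subr0 => ->.
      under eq_bigr do rewrite pd_phi_sd.
      by rewrite sum_dR.
    under eq_bigr do rewrite HY.
    have := Hr al; rewrite XNH // LNH //.
    move=> E; rewrite (eq_bigr (fun a => lam a t * Acon D (rc t) a al)) in E; last first.
      by move=> a _; rewrite pd_phi_rd.
    rewrite (_ : forall x y z : R, x - y - z = (x - z) - y); last by move=> *; ring.
    by rewrite E subrr mulr0.
  + move=> b.
    rewrite derive1E (near_eq_derive (g := fun _ => 0)); last first.
      near=> u; have Iu : I u by near: u; exact: nI.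
      cbv beta; rewrite A2 //.
      have phE : phi D (rc u) (derive1 rc u) (derive1 sc u) = fun _ => 0.
        by apply/funext => a; exact: Cs.
      by rewrite phE sum_0mul mulr0 oppr0.
    by rewrite derive_cst pd_LV_s mulr0 subrr.
- case=> LVe H0.
  pose h (b : 'I_k) u := f (rc u) * \sum_(a < k) phi D (rc u) (derive1 rc u) (derive1 sc u) a * gSS D (rc u) a b.
  have dvh : forall t, I t -> forall b, derivable (h b) t 1.
    move=> t It b; apply: isd_ex.
    exact: (isd_mul (isd_atom (dvF t It)) (isd_sum (fun a => isd_mul (isd_atom (dvph t It a)) (isd_atom (dvSS t It a b))))).
  have Dh : forall t, I t -> forall b, 'D_1 (h b) t = 0.
    move=> t It b; have [_ Ls] := LVe t It; have := Ls b.
    rewrite derive1E (near_eq_derive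
      (f := fun u => pd (fun w => LV D f (rc u) (sc u) (omR f rc u) w) b (omS f rc sc u))
      (g := fun u => - h b u)); last first.
      near=> u; have Iu : I u by near: u; exact: nI.
      by cbv beta; rewrite A2 // /h.
    rewrite (@pd_LV_s R m k D f (rc t) (sc t) (omR f rc t) (omS f rc sc t) b) mulr0 subr0.
    have HD := isd_opp (isd_atom (dvh t It b)).
    rewrite (@derive_val _ _ _ _ _ _ _ HD).
    by move/eqP; rewrite oppr_eq0 => /eqP.
  have h0 : forall t, I t -> forall b, h b t = 0.
    move=> t It b.
    rewrite (@cst_itv _ (h b) I iI (fun t It => conj (dvh t It b) (Dh t It b)) t0 t It0 It).
    rewrite /h (_ : phi D (rc t0) (derive1 rc t0) (derive1 sc t0) = fun _ => 0).
      by rewrite sum_0mul mulr0.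
    by apply/funext => a; rewrite -phi0E H0.
  have Cs : Cstr.
    move=> t It a.
    pose ph : 'rV[R]_k := \row_(a < k) phi D (rc t) (derive1 rc t) (derive1 sc t) a.
    pose gt := gtilde D f (rc t) (sc t) (omR f rc t) (omS f rc sc t).
    have gtU : gt \in unitmx by exact: gtunit (Ur t It).
    have P0 : ph *m gt = 0.
      apply/matrixP => i b; rewrite ord1 /gt gtilde_E ?sym2 // !mxE.
      have := h0 t It b; rewrite /h => /eqP; rewrite mulf_eq0 (negbTE (Fnz t It)) /= => /eqP S0.
      rewrite (eq_bigr (fun a => f (rc t) * f (rc t) * (phi D (rc t) (derive1 rc t) (derive1 sc t) a * gSS D (rc t) a b))); last first.
        by move=> a' _; rewrite !mxE; ring.
      by rewrite -mulr_sumr S0 mulr0.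
    have : ph = 0 by rewrite -(mulmxK gtU ph) P0 mul0mx.
    by move/matrixP/(_ 0 a); rewrite !mxE.
  split; first exact: Cs.
  exists (fun a t => 'D_1 (fun u => pS D (rc u) (derive1 rc u) (derive1 sc u) a) t).
  move=> t It; have [Lr Ls] := LVe t It; split.
  + move=> al; rewrite XNH // LNH //.
    under eq_bigr do rewrite pd_phi_rd.
    have := Lr al; rewrite KEY // => /eqP; rewrite mulf_eq0 (negbTE (Fnz t It)) /= => /eqP E.
    have Lr' : forall x s d : R, x - s - d = 0 -> x - d = s.
      by move=> x s d H1; apply/eqP; rewrite -subr_eq0 -H1; apply/eqP; ring.
    exact: Lr' E.
  + move=> b; rewrite YNH // pd_Lag_s subr0.
    under eq_bigr do rewrite pd_phi_sd.
    by rewrite sum_dR.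
Unshelve. all: by end_near.
Qed.
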